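(* Let $T$ be a hypercyclic bounded operator on a separable Banach space $X$. For any $\alpha>0$, there exists a comeager set of vectors $x\in HC(T)$ such that $\overline{\mathrm{dens}}\,\mathcal N_T(x,B_\alpha)=c(T)$.
   Context: $HC(T)$ is the set of vectors with dense $T$-orbit. $\mathcal N_T(x,B)=\{i\in\mathbb N:T^ix\in B\}$; $\overline{\mathrm{dens}}(D)=\limsup_N\frac1N\#(D\cap[1,N])$; $B_R$ is the closed ball of radius $R$ centred at $0$. $c(T)=\sup_{R>0}\sup_{x\in HC(T)}\overline{\mathrm{dens}}\,\mathcal N_T(x,B_R)$. *)

(* Defs.v *)
From Stdlib Require Import Reals Lra Lia Classical ClassicalEpsilon ClassicalDescription.
Open Scope R_scope.

Record NormedSpace := {
  ns_car :> Type;
  ns_zero : ns_car;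
  ns_add : ns_car -> ns_car -> ns_car;
  ns_opp : ns_car -> ns_car;
  ns_scal : R -> ns_car -> ns_car;
  ns_norm : ns_car -> R;
  ns_addA : forall x y z, ns_add x (ns_add y z) = ns_add (ns_add x y) z;
  ns_addC : forall x y, ns_add x y = ns_add y x;
  ns_add0 : forall x, ns_add x ns_zero = x;
  ns_addN : forall x, ns_add x (ns_opp x) = ns_zero;
  ns_scalA : forall a b x, ns_scal a (ns_scal b x) = ns_scal (a * b) x;
  ns_scal1 : forall x, ns_scal 1 x = x;
  ns_scalDr : forall a x y, ns_scal a (ns_add x y) = ns_add (ns_scal a x) (ns_scal a y);
  ns_scalDl : forall a b x, ns_scal (a + b) x = ns_add (ns_scal a x) (ns_scal b x);
  ns_norm_eq0 : forall x, ns_norm x = 0 -> x = ns_zero;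
  ns_normZ : forall a x, ns_norm (ns_scal a x) = Rabs a * ns_norm x;
  ns_normD : forall x y, ns_norm (ns_add x y) <= ns_norm x + ns_norm y
}.

Arguments ns_zero {_}. Arguments ns_add {_}. Arguments ns_opp {_}.
Arguments ns_scal {_}. Arguments ns_norm {_}.

Definition dist {X : NormedSpace} (x y : X) : R := ns_norm (ns_add x (ns_opp y)).

Definition complete (X : NormedSpace) : Prop :=
  forall u : nat -> X,
    (forall eps, 0 < eps -> exists N, forall m n, (N <= m)%nat -> (N <= n)%nat ->
        dist (u m) (u n) < eps) ->
    exists l : X, forall eps, 0 < eps -> exists N, forall n, (N <= n)%nat -> dist (u n) l < eps.

Definition dense {X : NormedSpace} (A : X -> Prop) : Prop :=
  forall x eps, 0 < eps -> exists y, A y /\ dist x y < eps.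

Definition separable (X : NormedSpace) : Prop :=
  exists d : nat -> X, dense (fun y => exists n, y = d n).

Definition is_open {X : NormedSpace} (U : X -> Prop) : Prop :=
  forall x, U x -> exists eps, 0 < eps /\ forall y, dist x y < eps -> U y.

Definition comeager {X : NormedSpace} (A : X -> Prop) : Prop :=
  exists U : nat -> X -> Prop,
    (forall n, is_open (U n) /\ dense (U n)) /\
    (forall x, (forall n, U n x) -> A x).

Definition bounded_operator {X : NormedSpace} (T : X -> X) : Prop :=
  (forall x y, T (ns_add x y) = ns_add (T x) (T y)) /\
  (forall a x, T (ns_scal a x) = ns_scal a (T x)) /\
  (exists C, forall x, ns_norm (T x) <= C * ns_norm x).

Definition iterT {X : NormedSpace} (T : X -> X) (i : nat) (x : X) : X := Nat.iter i T x.

Definition HC {X : NormedSpace} (T : X -> X) (x : X) : Prop :=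
  dense (fun y => exists n : nat, y = iterT T n x).

Definition hypercyclic {X : NormedSpace} (T : X -> X) : Prop := exists x, HC T x.

Definition ball0 {X : NormedSpace} (R0 : R) (y : X) : Prop := ns_norm y <= R0.

Definition NT {X : NormedSpace} (T : X -> X) (x : X) (B : X -> Prop) (i : nat) : Prop :=
  B (iterT T i x).

Fixpoint count_upto (D : nat -> Prop) (N : nat) : nat :=
  match N with
  | O => O
  | S n => (if excluded_middle_informative (D (S n)) then 1 else 0) + count_upto D n
  end.

Definition is_limsup (u : nat -> R) (l : R) : Prop :=
  forall eps, 0 < eps ->
    (exists N, forall n, (N <= n)%nat -> u n < l + eps) /\
    (forall N, exists n, (N <= n)%nat /\ l - eps < u n).

(** upper density: limsup_N #(D ∩ [1,N]) / N (well-defined since the sequence lies in [0,1]) *)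
Definition updens (D : nat -> Prop) : R :=
  epsilon (inhabits 0)
    (fun l => is_limsup (fun N => INR (count_upto D N) / INR N) l).

Definition cT {X : NormedSpace} (T : X -> X) : R :=
  epsilon (inhabits 0)
    (is_lub (fun d => exists R0, 0 < R0 /\ exists x, HC T x /\ d = updens (NT T x (ball0 R0)))).

(* Submission.v *)
Require Import Defs.
From Stdlib Require Import Reals Lra Lia ZArith Classical ClassicalEpsilon FunctionalExtensionality PropExtensionality.
From Coquelicot Require Import Coquelicot.
Open Scope R_scope.


Arguments ns_addA {_}. Arguments ns_addC {_}. Arguments ns_add0 {_}. Arguments ns_addN {_}.
Arguments ns_scalA {_}. Arguments ns_scal1 {_}. Arguments ns_scalDr {_}. Arguments ns_scalDl {_}.
Arguments ns_norm_eq0 {_}. Arguments ns_normZ {_}. Arguments ns_normD {_}.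
Lemma Rabs_m1' : Rabs (-1) = 1.
Proof. rewrite Rabs_left; lra. Qed.
Section Alg.
Variable X : NormedSpace.
Implicit Types x y z : X.

Lemma add_cancel_l x y z : ns_add x y = ns_add x z -> y = z.
Proof.
  intros H.
  assert (E: ns_add (ns_opp x) (ns_add x y) = ns_add (ns_opp x) (ns_add x z)) by (rewrite H; auto).
  rewrite !ns_addA in E. rewrite (ns_addC (ns_opp x) x), ns_addN in E.
  rewrite !(ns_addC ns_zero), !ns_add0 in E. exact E.
Qed.

Lemma scal0 x : ns_scal 0 x = ns_zero.
Proof.
  apply (add_cancel_l (ns_scal 0 x)). rewrite <- ns_scalDl, Rplus_0_r, ns_add0. auto.
Qed.

Lemma opp_scal x : ns_opp x = ns_scal (-1) x.
Proof.
  apply (add_cancel_l x). rewrite ns_addN.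
  rewrite <- (ns_scal1 x) at 1. rewrite <- ns_scalDl. replace (1 + -1) with 0 by ring.
  rewrite scal0; auto.
Qed.

Lemma norm_zero : ns_norm (@ns_zero X) = 0.
Proof. rewrite <- (scal0 ns_zero), ns_normZ, Rabs_R0. ring. Qed.

Lemma norm_ge0 x : 0 <= ns_norm x.
Proof.
  pose proof (ns_normD x (ns_opp x)). rewrite ns_addN, norm_zero, opp_scal, ns_normZ in H.
  rewrite Rabs_m1' in H. lra.
Qed.

Lemma norm_opp x : ns_norm (ns_opp x) = ns_norm x.
Proof. rewrite opp_scal, ns_normZ, Rabs_m1'; ring. Qed.

Lemma opp_add_sub x y : ns_opp (ns_add x (ns_opp y)) = ns_add y (ns_opp x).
Proof.
  rewrite !opp_scal, ns_scalDr, ns_scalA. replace (-1 * -1) with 1 by ring.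
  rewrite ns_scal1, ns_addC. auto.
Qed.

Lemma dist_sym x y : Defs.dist x y = Defs.dist y x.
Proof. unfold Defs.dist. rewrite <- norm_opp, opp_add_sub. auto. Qed.

Lemma dist_tri x y z : Defs.dist x z <= Defs.dist x y + Defs.dist y z.
Proof.
  unfold Defs.dist.
  replace (ns_add x (ns_opp z)) with (ns_add (ns_add x (ns_opp y)) (ns_add y (ns_opp z))).
  apply ns_normD.
  rewrite <- ns_addA, (ns_addA (ns_opp y)), (ns_addC (ns_opp y) y), ns_addN,
    (ns_addC ns_zero), ns_add0. auto.
Qed.

Lemma dist_self x : Defs.dist x x = 0.
Proof. unfold Defs.dist. rewrite ns_addN. apply norm_zero. Qed.

Lemma dist_shift x u : Defs.dist (ns_add x u) x = ns_norm u.
Proof.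
  unfold Defs.dist. rewrite (ns_addC x u), <- ns_addA, ns_addN, ns_add0. auto.
Qed.

Lemma scal_div_dist (s : R) x w : s <> 0 ->
  ns_add x (ns_opp (ns_scal s w)) = ns_scal s (ns_add (ns_scal (/s) x) (ns_opp w)).
Proof.
  intros Hs. rewrite ns_scalDr, ns_scalA, Rinv_r by auto. rewrite ns_scal1.
  rewrite !opp_scal, !ns_scalA. replace (s * -1) with (-1 * s) by ring. auto.
Qed.

Lemma norm_le_dist x y : ns_norm y <= ns_norm x + Defs.dist x y.
Proof.
  rewrite dist_sym. unfold Defs.dist.
  replace y with (ns_add x (ns_add y (ns_opp x))) at 1.
  apply ns_normD.
  rewrite (ns_addC y), ns_addA, ns_addN, ns_addC, ns_add0. auto.
Qed.

End Alg.


Section Op.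
Variable X : NormedSpace.
Variable T : X -> X.
Hypothesis HT : bounded_operator T.

Lemma T_add x y : T (ns_add x y) = ns_add (T x) (T y).
Proof. destruct HT as [H _]. auto. Qed.
Lemma T_scal a x : T (ns_scal a x) = ns_scal a (T x).
Proof. destruct HT as [_ [H _]]. auto. Qed.
Lemma T_opp x : T (ns_opp x) = ns_opp (T x).
Proof. rewrite !opp_scal, T_scal. auto. Qed.

Lemma iter_scal j s x : iterT T j (ns_scal s x) = ns_scal s (iterT T j x).
Proof. unfold iterT; induction j; simpl; auto. rewrite IHj, T_scal; auto. Qed.

Lemma iter_sub j x y : iterT T j (ns_add x (ns_opp y)) = ns_add (iterT T j x) (ns_opp (iterT T j y)).
Proof. unfold iterT; induction j; simpl; auto. rewrite IHj, T_add, T_opp; auto. Qed.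

Lemma T_bound : exists K, 1 <= K /\ forall x, ns_norm (T x) <= K * ns_norm x.
Proof.
  destruct HT as [_ [_ [C HC]]]. exists (Rabs C + 1). split.
  pose proof (Rabs_pos C); lra.
  intros x. specialize (HC x). pose proof (norm_ge0 X x).
  pose proof (Rle_abs C). nra.
Qed.

Lemma iter_bound K : 1 <= K -> (forall x, ns_norm (T x) <= K * ns_norm x) ->
  forall j x, ns_norm (iterT T j x) <= K ^ j * ns_norm x.
Proof.
  intros HK1 HK j x. unfold iterT; induction j; simpl. lra.
  eapply Rle_trans. apply HK. rewrite Rmult_assoc. apply Rmult_le_compat_l; lra.
Qed.

Lemma iter_dist K : 1 <= K -> (forall x, ns_norm (T x) <= K * ns_norm x) ->
  forall j x y, Defs.dist (iterT T j x) (iterT T j y) <= K ^ j * Defs.dist x y.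
Proof.
  intros. unfold Defs.dist. rewrite <- iter_sub. apply iter_bound; auto.
Qed.

End Op.


Lemma count_le D N : (count_upto D N <= N)%nat.
Proof. induction N; simpl; auto. destruct (ClassicalDescription.excluded_middle_informative (D (S N))); lia. Qed.

Lemma count_mono (D D' : nat -> Prop) N : (forall i, D i -> D' i) -> (count_upto D N <= count_upto D' N)%nat.
Proof.
  intros H; induction N; simpl; auto.
  destruct (ClassicalDescription.excluded_middle_informative (D (S N))); destruct (ClassicalDescription.excluded_middle_informative (D' (S N))); try lia.
  exfalso; auto.
Qed.

Lemma count_shift D j N : (count_upto D (N + j) <= j + count_upto (fun i => D (i + j)%nat) N)%nat.
Proof.
  induction N; simpl.
  - rewrite Nat.add_0_r; apply count_le.
  - destruct (ClassicalDescription.excluded_middle_informative (D (S (N + j)))); destruct (ClassicalDescription.excluded_middle_informative (D (S N + j)%nat)); simpl in *; try lia.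
Qed.

Definition ratio (D : nat -> Prop) (N : nat) : R := INR (count_upto D N) / INR N.

Lemma ratio_bounds D N : 0 <= ratio D N <= 1.
Proof.
  unfold ratio. destruct N.
  - simpl. unfold Rdiv. rewrite Rinv_0. lra.
  - pose proof (count_le D (S N)). apply le_INR in H.
    pose proof (lt_0_INR (S N) ltac:(lia)). pose proof (pos_INR (count_upto D (S N))).
    split. apply Rdiv_le_0_compat; lra.
    apply (Rmult_le_reg_r (INR (S N))); [lra|]; unfold Rdiv; rewrite Rmult_assoc, Rinv_l by lra; lra.
Qed.

Lemma updens_spec D : is_limsup (ratio D) (updens D).
Proof.
  unfold updens. apply epsilon_spec.
  destruct (ex_LimSup_seq (ratio D)) as [l Hl].
  destruct l as [l| |].
  - exists l. unfold is_limsup. intros eps Heps. destruct (Hl (mkposreal eps Heps)) as [H1 H2]. simpl in *.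
    split; [exact H2|]. intros N. destruct (H1 N) as [n [Hn Hn']]. exists n; split; [lia|auto].
  - exfalso. destruct (Hl 2%R 0%nat) as [n [_ Hn]]. pose proof (ratio_bounds D n). lra.
  - exfalso. destruct (Hl 0%R) as [N HN]. specialize (HN N (le_n N)). pose proof (ratio_bounds D N). lra.
Qed.

Lemma updens_le1 D : updens D <= 1.
Proof.
  destruct (Rle_dec (updens D) 1) as [h|h]; auto. exfalso.
  destruct (updens_spec D ((updens D - 1)/2) ltac:(lra)) as [_ H].
  destruct (H 0%nat) as [n [_ Hn]]. pose proof (ratio_bounds D n). lra.
Qed.

Lemma arch_nat (r : R) : exists n : nat, r < INR n.
Proof.
  destruct (archimed r) as [H _].
  destruct (Z.lt_ge_cases (up r) 0) as [l|l].
  - exists 0%nat. apply IZR_lt in l. simpl. lra.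
  - exists (Z.to_nat (up r)). rewrite INR_IZR_INZ, Z2Nat.id by lia. auto.
Qed.

Lemma count_mono_le (D D' : nat -> Prop) N : (forall i, (i <= N)%nat -> D i -> D' i) -> (count_upto D N <= count_upto D' N)%nat.
Proof.
  induction N; intros H; simpl; auto.
  assert (IH := IHN ltac:(intros i Hi; apply H; lia)).
  destruct (ClassicalDescription.excluded_middle_informative (D (S N))); destruct (ClassicalDescription.excluded_middle_informative (D' (S N))); try lia.
  exfalso; auto.
Qed.

Lemma ratio_mono_le (D D' : nat -> Prop) N : (forall i, (i <= N)%nat -> D i -> D' i) -> ratio D N <= ratio D' N.
Proof.
  intros H. unfold ratio, Rdiv. apply Rmult_le_compat_r.
  destruct N. simpl. rewrite Rinv_0; lra.
  left. apply Rinv_0_lt_compat, lt_0_INR; lia.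
  apply le_INR, count_mono_le; auto.
Qed.


Lemma finite_eps {X : NormedSpace} (x : X) (Q : nat -> X -> Prop) N :
  (forall i, (i <= N)%nat -> exists e, 0 < e /\ forall y, Defs.dist x y < e -> Q i y) ->
  exists e, 0 < e /\ forall y, Defs.dist x y < e -> forall i, (i <= N)%nat -> Q i y.
Proof.
  induction N; intros H.
  - destruct (H 0%nat (le_n 0)) as [e [He Hy]]. exists e; split; auto.
    intros y Hd i Hi. assert (i = 0%nat) by lia. subst; auto.
  - destruct IHN as [e1 [He1 H1]]. { intros i Hi; apply H; lia. }
    destruct (H (S N) (le_n _)) as [e2 [He2 H2]].
    exists (Rmin e1 e2). split. apply Rmin_pos; auto.
    intros y Hd i Hi. destruct (Nat.eq_dec i (S N)) as [->|].
    + apply H2. eapply Rlt_le_trans; [exact Hd|apply Rmin_r].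
    + apply H1; [eapply Rlt_le_trans; [exact Hd|apply Rmin_l]|lia].
Qed.

Lemma ratio_mono (D D' : nat -> Prop) N : (forall i, D i -> D' i) -> ratio D N <= ratio D' N.
Proof.
  intros H. unfold ratio, Rdiv. apply Rmult_le_compat_r.
  destruct N. simpl. rewrite Rinv_0; lra.
  left. apply Rinv_0_lt_compat, lt_0_INR; lia.
  apply le_INR, count_mono; auto.
Qed.

Section Main.
Variable X : NormedSpace.
Variable T : X -> X.
Hypothesis HT : bounded_operator T.
Variable alpha : R.
Hypothesis Halpha : 0 < alpha.
Variable dseq : nat -> X.

Definition V (n : nat) (x : X) : Prop :=
  forall p, (p <= n)%nat -> exists j, Defs.dist (dseq p) (iterT T j x) < / (INR n + 1).
Definition Sopen (x : X) (i : nat) : Prop := ns_norm (iterT T i x) < alpha.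
Definition W (c : R) (n : nat) (x : X) : Prop :=
  exists N, (n <= N)%nat /\ c - / (INR n + 1) < ratio (Sopen x) N.

Lemma inv_pos n : 0 < / (INR n + 1).
Proof. apply Rinv_0_lt_compat. pose proof (pos_INR n); lra. Qed.

Lemma V_open n : is_open (V n).
Proof.
  destruct (T_bound X T HT) as [K [HK1 HK]].
  intros x Hx.
  destruct (finite_eps x (fun p y => exists j, Defs.dist (dseq p) (iterT T j y) < / (INR n + 1)) n)
    as [e [He H]].
  - intros p Hp. destruct (Hx p Hp) as [j Hj].
    assert (HKj : 0 < K ^ j) by (apply pow_lt; lra).
    exists ((/ (INR n + 1) - Defs.dist (dseq p) (iterT T j x)) / K ^ j). split.
    + apply Rdiv_lt_0_compat; lra.
    + intros y Hy. exists j.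
      pose proof (Submission.dist_tri X (dseq p) (iterT T j x) (iterT T j y)).
      pose proof (iter_dist X T HT K HK1 HK j x y).
      assert (K ^ j * Defs.dist x y < / (INR n + 1) - Defs.dist (dseq p) (iterT T j x)).
      { apply (Rmult_lt_compat_l (K ^ j)) in Hy; auto.
        match type of Hy with _ < _ * (?a / _) => replace (K ^ j * (a / K ^ j)) with a in Hy by (field; split; try apply pow_nonzero; pose proof (pos_INR n); lra) end. exact Hy. }
      lra.
  - exists e. split; [exact He|]. intros y Hy. exact (H y Hy).
Qed.

Lemma W_open c n : is_open (W c n).
Proof.
  destruct (T_bound X T HT) as [K [HK1 HK]].
  intros x [N [HN Hr]].
  destruct (finite_eps x (fun i y => Sopen x i -> Sopen y i) N) as [e [He H]].
  - intros i Hi. destruct (Rlt_dec (ns_norm (iterT T i x)) alpha) as [Hlt|Hlt].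
    + assert (HKj : 0 < K ^ i) by (apply pow_lt; lra).
      exists ((alpha - ns_norm (iterT T i x)) / K ^ i). split.
      * apply Rdiv_lt_0_compat; lra.
      * intros y Hy _. unfold Sopen.
        pose proof (norm_le_dist X (iterT T i x) (iterT T i y)).
        pose proof (iter_dist X T HT K HK1 HK i x y).
        assert (K ^ i * Defs.dist x y < alpha - ns_norm (iterT T i x)).
        { apply (Rmult_lt_compat_l (K ^ i)) in Hy; auto.
          match type of Hy with _ < _ * (?a / _) => replace (K ^ i * (a / K ^ i)) with a in Hy by (field; apply pow_nonzero; lra) end. exact Hy. }
        lra.
    + exists 1. split. lra. intros y _ Hs. exfalso. apply Hlt. exact Hs.
  - exists e. split; auto. intros y Hy. exists N. split; auto.
    eapply Rlt_le_trans; [exact Hr|].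
    apply ratio_mono_le. intros i Hi Hs. apply (H y Hy i Hi Hs).
Qed.


Lemma iter_iter i j x : iterT T i (iterT T j x) = iterT T (i + j) x.
Proof. unfold iterT. rewrite Nat.iter_add. auto. Qed.

Lemma recurrence x0 : HC T x0 -> forall i d r, 0 < r ->
  exists j, (i <= j)%nat /\ Defs.dist d (iterT T j x0) < r.
Proof.
  intros Hx0.
  destruct (classic (exists e : X, e <> ns_zero)) as [[e He]|Htriv].
  2:{ intros i d r Hr. exists i. split; auto.
      assert (Hz : forall w : X, w = ns_zero).
      { intros w. destruct (classic (w = ns_zero)); auto. exfalso; apply Htriv; exists w; auto. }
      rewrite (Hz d), (Hz (iterT T i x0)), dist_self. lra. }
  assert (Hne : 0 < ns_norm e).
  { destruct (norm_ge0 X e) as [h|h]; auto. exfalso. apply He, ns_norm_eq0. auto. }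
  induction i; intros d r Hr.
  - destruct (Hx0 d r Hr) as [y [[n ->] Hy]]. exists n. split; [lia|auto].
  - set (u := ns_scal (r / (2 * ns_norm e)) e).
    assert (Hu : ns_norm u = r / 2).
    { unfold u. rewrite ns_normZ, Rabs_pos_eq. field. lra.
      apply Rlt_le, Rdiv_lt_0_compat; lra. }
    destruct (IHi d (r / 4) ltac:(lra)) as [j1 [Hj1 H1]].
    destruct (IHi (ns_add d u) (r / 4) ltac:(lra)) as [j2 [Hj2 H2]].
    destruct (Nat.eq_dec j1 i) as [E1|E1].
    2:{ exists j1. split. lia. lra. }
    destruct (Nat.eq_dec j2 i) as [E2|E2].
    2:{ exists j2. split. lia.
        pose proof (Submission.dist_tri X d (ns_add d u) (iterT T j2 x0)).
        rewrite (Submission.dist_sym X d (ns_add d u)), dist_shift in H. lra. }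
    exfalso. subst j1 j2.
    pose proof (Submission.dist_tri X (ns_add d u) (iterT T i x0) d).
    rewrite dist_shift, (Submission.dist_sym X (iterT T i x0)) in H. lra.
Qed.

Lemma HC_scal x0 s : HC T x0 -> 0 < s -> HC T (ns_scal s x0).
Proof.
  intros Hx Hs z eps Heps.
  destruct (Hx (ns_scal (/ s) z) (eps / s) ltac:(apply Rdiv_lt_0_compat; lra)) as [y [[n ->] Hy]].
  exists (iterT T n (ns_scal s x0)). split. exists n; auto.
  rewrite iter_scal by auto. unfold Defs.dist in *. rewrite scal_div_dist by lra.
  rewrite ns_normZ, Rabs_pos_eq by lra.
  apply (Rmult_lt_compat_l s) in Hy; auto.
  replace (s * (eps / s)) with eps in Hy by (field; lra). exact Hy.
Qed.

Hypothesis Hdense : dense (fun y => exists n, y = dseq n).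

Lemma HC_from_V x : (forall n, V n x) -> HC T x.
Proof.
  intros HV z eps Heps.
  destruct (Hdense z (eps / 2) ltac:(lra)) as [y [[p ->] Hy]].
  destruct (arch_nat (2 / eps)) as [m Hm].
  destruct (HV (p + m)%nat p ltac:(lia)) as [j Hj].
  exists (iterT T j x). split. exists j; auto.
  assert (/ (INR (p + m) + 1) < eps / 2).
  { rewrite plus_INR. pose proof (pos_INR p). pose proof (pos_INR m).
    apply (Rmult_lt_reg_l (INR p + INR m + 1)). lra.
    rewrite Rinv_r by lra.
    assert (2 < eps * INR m).
    { apply (Rmult_lt_compat_l eps) in Hm; auto. replace (eps * (2 / eps)) with 2 in Hm by (field; lra). lra. }
    nra. }
  pose proof (Submission.dist_tri X z (dseq p) (iterT T j x)). lra.
Qed.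

Lemma U_dense c n y0 : HC T y0 -> (forall j, W c n (iterT T j y0)) ->
  dense (fun x => V n x /\ W c n x).
Proof.
  intros Hy0 HW z eps Heps.
  destruct (Hy0 z eps Heps) as [y [[j ->] Hy]].
  exists (iterT T j y0). split; auto. split; auto.
  intros p Hp. destruct (recurrence y0 Hy0 j (dseq p) (/ (INR n + 1)) (inv_pos n)) as [j' [Hj' H']].
  exists (j' - j)%nat. rewrite iter_iter. replace (j' - j + j)%nat with j' by lia. auto.
Qed.


Lemma lt_div_iff r x y : 0 < y -> (r < x / y <-> r * y < x).
Proof.
  intros Hy. split; intros H.
  - apply (Rmult_lt_compat_r y) in H; auto. replace (x / y * y) with x in H by (field; lra). auto.
  - apply (Rmult_lt_reg_r y); auto. replace (x / y * y) with x by (field; lra). auto.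
Qed.

Lemma W_shift c n y0 : c - / (INR n + 1) / 2 < updens (NT T y0 (ball0 (alpha / 2))) ->
  forall j, W c n (iterT T j y0).
Proof.
  intros Hl j. set (D0 := NT T y0 (ball0 (alpha / 2))) in *.
  pose proof (inv_pos n) as Hd. set (d := / (INR n + 1)) in *.
  destruct (updens_spec D0 (updens D0 - (c - d / 2)) ltac:(lra)) as [_ Hinf].
  destruct (arch_nat (INR j / (d / 2))) as [K HK].
  destruct (Hinf (n + j + 1 + K)%nat) as [m [Hm Hr]].
  exists (m - j)%nat. split. lia. fold d.
  pose proof (count_shift D0 j (m - j)) as Hs. replace (m - j + j)%nat with m in Hs by lia.
  assert (Hmono : (count_upto (fun i => D0 (i + j)%nat) (m - j) <= count_upto (Sopen (iterT T j y0)) (m - j))%nat).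
  { apply count_mono. intros i Hi. unfold D0, NT, ball0 in Hi. unfold Sopen. rewrite iter_iter. lra. }
  apply le_INR in Hs. apply le_INR in Hmono. rewrite plus_INR in Hs.
  unfold ratio in *.
  assert (HN : 0 < INR (m - j)) by (apply lt_0_INR; lia).
  assert (HNM : INR (m - j) <= INR m) by (apply le_INR; lia).
  assert (HKm : INR K <= INR m) by (apply le_INR; lia).
  apply lt_div_iff; auto.
  apply lt_div_iff in Hr; [|lra].
  assert (Hj : INR j < d / 2 * INR K).
  { apply (Rmult_lt_compat_l (d / 2)) in HK; [|lra]. replace (d / 2 * (INR j / (d / 2))) with (INR j) in HK by (field; lra). auto. }
  pose proof (pos_INR (count_upto (Sopen (iterT T j y0)) (m - j))).
  assert (Hr' : (c - d / 2) * INR m < INR (count_upto D0 m)).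
  { replace ((c - d / 2) * INR m) with ((updens D0 - (updens D0 - (c - d / 2))) * INR m) by ring. exact Hr. }
  assert (HdK : d / 2 * INR K <= d / 2 * INR m) by (apply Rmult_le_compat_l; lra).
  assert (Hb : (c - d) * INR m < INR (count_upto (Sopen (iterT T j y0)) (m - j))).
  { replace ((c - d) * INR m) with ((c - d / 2) * INR m - d / 2 * INR m) by (clearbody d; idtac; field). lra. }
  destruct (Rle_dec 0 (c - d)).
  - assert ((c - d) * INR (m - j) <= (c - d) * INR m) by (apply Rmult_le_compat_l; auto).
    lra.
  - assert ((c - d) * INR (m - j) < 0) by nra. lra.
Qed.

End Main.


Theorem lemma4 (X : NormedSpace) (HXc : complete X) (HXs : separable X)
  (T : X -> X) (HT : bounded_operator T) (Hhyp : hypercyclic T)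
  (alpha : R) (Halpha : 0 < alpha) :
  comeager (fun x : X => HC T x /\ updens (NT T x (ball0 alpha)) = cT T).
Proof.
  destruct HXs as [dseq Hdense].
  destruct Hhyp as [x0 Hx0].
  set (S := fun d => exists R0, 0 < R0 /\ exists x, HC T x /\ d = updens (NT T x (ball0 R0))).
  assert (Hlub : is_lub S (cT T)).
  { unfold cT. apply epsilon_spec.
    destruct (completeness S) as [m Hm].
    - exists 1. intros d [R0 [_ [x [_ ->]]]]. apply updens_le1.
    - exists (updens (NT T x0 (ball0 1))). exists 1. split. lra. exists x0; auto.
    - exists m; auto. }
  set (c := cT T) in *.
  assert (Hnear : forall n, exists y0, HC T y0 /\
            c - / (INR n + 1) / 2 < updens (NT T y0 (ball0 (alpha / 2)))).
  { intros n. pose proof (inv_pos n).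
    destruct (classic (exists d, S d /\ c - / (INR n + 1) / 2 < d)) as [[d [[R0 [HR0 [x [Hx ->]]]] Hd]]|Hno].
    - assert (Hs : 0 < alpha / 2 / R0) by (apply Rdiv_lt_0_compat; lra).
      exists (ns_scal (alpha / 2 / R0) x). split. apply HC_scal; auto.
      replace (NT T (ns_scal (alpha / 2 / R0) x) (ball0 (alpha / 2))) with (NT T x (ball0 R0)); auto.
      apply functional_extensionality; intros i. apply propositional_extensionality.
      unfold NT, ball0. rewrite iter_scal by auto. rewrite ns_normZ, Rabs_pos_eq by lra.
      set (s := alpha / 2 / R0) in *.
      assert (E : alpha / 2 = s * R0) by (unfold s; field; lra).
      rewrite E. split; intros Hi.
      + apply Rmult_le_compat_l; lra.
      + apply Rmult_le_reg_l in Hi; lra.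
    - exfalso. destruct Hlub as [_ Hl].
      assert (c <= c - / (INR n + 1) / 2); [|lra].
      apply Hl. intros d Hd. apply Rnot_lt_le. intro; apply Hno; eauto. }
  exists (fun n x => V X T dseq n x /\ W X T alpha c n x).
  split.
  - intros n. split.
    + intros x [Hv Hw].
      destruct (V_open X T HT dseq n x Hv) as [e1 [He1 H1]].
      destruct (W_open X T HT alpha c n x Hw) as [e2 [He2 H2]].
      exists (Rmin e1 e2). split. apply Rmin_pos; auto.
      intros y Hy. split.
      * apply H1. eapply Rlt_le_trans; [exact Hy|apply Rmin_l].
      * apply H2. eapply Rlt_le_trans; [exact Hy|apply Rmin_r].
    + destruct (Hnear n) as [y0 [Hy0 Hl]].
      apply (U_dense X T alpha dseq c n y0 Hy0). apply W_shift; auto.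
  - intros x Hx. assert (HCx : HC T x).
    { apply (HC_from_V X T dseq Hdense). intros n; apply Hx. }
    split; auto.
    apply Rle_antisym.
    + destruct Hlub as [Hub _]. apply Hub. exists alpha. split; auto. exists x; auto.
    + apply Rnot_lt_le. intros Hlt.
      set (D := NT T x (ball0 alpha)) in *.
      set (del := (c - updens D) / 3).
      destruct (updens_spec D del ltac:(unfold del; lra)) as [[N0 HN0] _].
      destruct (arch_nat (/ del)) as [k Hk].
      destruct (Hx (k + N0)%nat) as [_ [N [HN Hr]]].
      assert (Hmon : ratio (Sopen X T alpha x) N <= ratio D N).
      { apply ratio_mono. intros i Hi. unfold Sopen in Hi. unfold D, NT, ball0. lra. }
      specialize (HN0 N ltac:(lia)).
      assert (Hinv : / (INR (k + N0) + 1) < del).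
      { assert (Hdel : 0 < del) by (unfold del; lra).
        rewrite plus_INR. pose proof (pos_INR N0).
        apply (Rmult_lt_reg_l (INR k + INR N0 + 1)). pose proof (pos_INR k); lra.
        rewrite Rinv_r by (pose proof (pos_INR k); lra).
        assert (1 < del * INR k).
        { apply (Rmult_lt_compat_l del) in Hk; auto. rewrite Rinv_r in Hk by lra. lra. }
        nra. }
      unfold del in *. lra.
Qed.
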